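(* Let $n\ge 2$, $C>0$, let $x\in\mathcal{K}_{S+}$, and let $\tilde{x}=x+\eta$ where either $\eta$ has i.i.d. Laplace entries with mean $0$ and scale $b>0$, or $\eta\sim\mathcal{N}(0,\sigma^2I_n)$ with $\sigma>0$. Then for every pair $(i,j)$ with $x_i\le x_j$, $$\mathcal{B}(\pi_{S+})_i-\mathcal{B}(\pi_{S+})_j\le x_j-x_i.$$
   Context: Let $C>0$, $\mathcal{K}_S=\{v\in\mathbb{R}^n:\sum_i v_i=C\}$, $\mathcal{K}_{S+}=\{v\in\mathcal{K}_S:v\ge0\}$, and $\pi_{S+}(\tilde{x})=\arg\min_{v\in\mathcal{K}_{S+}}\|v-\tilde{x}\|_2$. The bias of a map $\pi:\mathbb{R}^n\to\mathbb{R}^n$ is $\mathcal{B}(\pi)=\mathbb{E}_{\tilde{x}}[\pi(\tilde{x})]-x$. *)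

(* Defs.v *)
From HB Require Import structures.
From mathcomp Require Import all_boot all_order all_algebra.
From mathcomp Require Import all_classical all_reals all_analysis.
Set Implicit Arguments. Unset Strict Implicit. Unset Printing Implicit Defensive.
Import Order.TTheory GRing.Theory Num.Theory.
Local Open Scope classical_set_scope.
Local Open Scope ring_scope.

Section defs.
Variables (R : realType) (n : nat).

Definition simplex_pos (C : R) : set ('I_n -> R) :=
  [set v | \sum_(i < n) v i = C /\ (forall i, 0 <= v i)].

Definition dist2 (v y : 'I_n -> R) : R := Num.sqrt (\sum_(i < n) (v i - y i) ^+ 2).

Definition is_proj (C : R) (y v : 'I_n -> R) : Prop :=
  simplex_pos C v /\ (forall w, simplex_pos C w -> dist2 v y <= dist2 w y).

(* pi_{S+}(y) = argmin_{v in K_{S+}} ||v - y||_2 (the minimizer exists and is unique) *)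
Definition proj_simplex (C : R) (y : 'I_n -> R) : 'I_n -> R :=
  xget (fun _ => 0) (is_proj C y).

Definition laplace_pdf (b x : R) : R := (b *+ 2)^-1 * expR (- `|x| / b).
Definition laplace_prob (b : R) : set R -> \bar R :=
  fun V => (\int[lebesgue_measure]_(x in V) (laplace_pdf b x)%:E)%E.

Definition mutually_independent d (T : measurableType d) (P : probability T R)
  (eta : 'I_n -> T -> R) : Prop :=
  forall A : 'I_n -> set R, (forall i, measurable (A i)) ->
    P (\bigcap_(i in [set: 'I_n]) (eta i @^-1` A i)) =
    (\prod_(i < n) P (eta i @^-1` A i))%E.

Definition bias_proj d (T : measurableType d) (P : probability T R)
  (C : R) (x : 'I_n -> R) (eta : 'I_n -> T -> R) (k : 'I_n) : \bar R :=
  (\int[P]_w (proj_simplex C (fun i => x i + eta i w) k)%:E - (x k)%:E)%E.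

End defs.

(* Main.v *)
Require Import Defs.
From HB Require Import structures.
From mathcomp Require Import all_boot all_order all_algebra.
From mathcomp Require Import all_classical all_reals all_analysis.
From mathcomp Require Import ring lra.
From mathcomp Require Import perm.
Import Order.TTheory GRing.Theory Num.Theory.

Import numFieldNormedType.Exports.
Local Open Scope classical_set_scope.
Local Open Scope ring_scope.

Section det.
Variables (R : realType) (n : nat) (C : R).
Hypothesis hC : 0 < C.

Definition fS (y : 'I_n -> R) (t : R) : R := \sum_(k < n) Num.max (y k - t) 0.

Lemma term_le (a s t : R) : s <= t -> Num.max (a - t) 0 <= Num.max (a - s) 0.
Proof.
move=> st; rewrite ge_max !le_max lexx orbT andbT.
by rewrite lerB.
Qed.

Lemma fS_ge0 y t : 0 <= fS y t.
Proof. by apply: sumr_ge0 => k _; rewrite le_max lexx orbT. Qed.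

Lemma fS_nonincr y s t : s <= t -> fS y t <= fS y s.
Proof. by move=> st; apply: ler_sum => k _; exact: term_le. Qed.

Lemma fS_strict y s t : s < t -> 0 < fS y t -> fS y t < fS y s.
Proof.
move=> st ft.
have [[k hk]|nok] := pselect (exists k, 0 < Num.max (y k - t) 0); last first.
  move: ft; rewrite /fS big1 ?ltxx // => k _.
  apply/eqP; rewrite eq_le le_max lexx orbT andbT.
  by rewrite leNgt; apply/negP => h; apply: nok; exists k.
rewrite /fS (bigD1 k) //= [X in _ < X](bigD1 k) //=.
apply: ltr_leD; last by apply: ler_sum => m _; apply: term_le; exact: ltW.
move: hk; rewrite lt_max ltxx orbF => hk.
rewrite (max_idPl (ltW hk)).
by rewrite lt_max; apply/orP; left; rewrite ltrD2l ltrN2.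
Qed.


Lemma fS_cont y : continuous (fS y).
Proof.
rewrite /fS.
suff H : forall r : seq 'I_n,
    continuous (fun t => \sum_(k <- r) Num.max (y k - t) 0) by exact: H.
elim=> [|a r IH].
  under eq_fun do rewrite big_nil; exact: cst_continuous.
under eq_fun do rewrite big_cons.
move=> t; apply: (@continuousD _ _ _ (fun t => Num.max (y a - t) 0)
   (fun t => \sum_(k <- r) Num.max (y k - t) 0)); last exact: IH.
apply: (@continuous_max _ _ (fun t => y a - t) (fun=> 0)).
  by apply: (@continuousB _ _ _ (fun=> y a) id); [exact: cst_continuous|exact: cvg_id].
exact: cst_continuous.
Qed.

Lemma le_sum_abs (y : 'I_n -> R) k : y k <= \sum_m `|y m|.
Proof.
apply: le_trans (ler_norm (y k)) _.
rewrite (bigD1 k) //= ler_wpDr //; exact: sumr_ge0.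
Qed.

Lemma fS_exists y (k0 : 'I_n) : exists t, fS y t = C.
Proof.
set t1 := \sum_m `|y m|.
have f1 : fS y t1 = 0.
  rewrite /fS big1 // => k _; apply/max_idPr; rewrite subr_le0; exact: le_sum_abs.
have f0 : C <= fS y (y k0 - C).
  rewrite /fS (bigD1 k0) //=.
  have -> : y k0 - (y k0 - C) = C by rewrite opprB addrCA subrr addr0.
  rewrite (max_idPl (ltW hC)) lerDl.
  by apply: sumr_ge0 => k _; rewrite le_max lexx orbT.
have le01 : y k0 - C <= t1.
  by apply: le_trans (le_sum_abs y k0); rewrite gerDl oppr_le0 ltW.
have hm : Num.min (fS y (y k0 - C)) (fS y t1) <= C <= Num.max (fS y (y k0 - C)) (fS y t1).
  by rewrite ge_min le_max f1 f0 (ltW hC) orbT.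
have [c _ hc] := IVT le01 (continuous_subspaceT (fS_cont y)) hm.
by exists c.
Qed.

Hypothesis hn : (0 < n)%N.

Definition tau y := xget 0 [set t | fS y t = C].

Lemma tauP y : fS y (tau y) = C.
Proof. by apply: (@xgetPex _ 0 [set t | fS y t = C]); exact: fS_exists (Ordinal hn). Qed.

Lemma fS_uniq y s t : fS y s = C -> fS y t = C -> s = t.
Proof.
move=> fs ft; case: (ltgtP s t) => // st.
  by have := fS_strict y _ _ st; rewrite ft fs ltxx => /(_ hC).
by have := fS_strict y _ _ st; rewrite ft fs ltxx => /(_ hC).
Qed.

Lemma tau_lt y t : (tau y < t) <-> (fS y t < C).
Proof.
split=> h.
  have [ft0|] := ltP 0 (fS y t).
    by rewrite -(tauP y); exact: fS_strict.
  by move=> ft; apply: le_lt_trans ft hC.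
rewrite ltNge; apply/negP => tt.
by move: (fS_nonincr y _ _ tt); rewrite tauP leNgt h.
Qed.


Definition PJ y k := Num.max (y k - tau y) 0.

Lemma max0_le (a b : R) : a <= b -> Num.max a 0 <= Num.max b 0.
Proof. by move=> ab; rewrite ge_max !le_max lexx ab !orbT. Qed.

Lemma PJ_ge0 y k : 0 <= PJ y k.
Proof. by rewrite /PJ le_max lexx orbT. Qed.

Lemma PJ_simplex y : simplex_pos C (PJ y).
Proof. by split; [exact: tauP | exact: PJ_ge0]. Qed.

Lemma PJ_ineq y w : simplex_pos C w ->
  \sum_k (PJ y k - y k) ^+ 2 + \sum_k (w k - PJ y k) ^+ 2 <= \sum_k (w k - y k) ^+ 2.
Proof.
case=> sw w0; set v := PJ y; set t := tau y.
have key : 0 <= \sum_k (w k - v k) * (v k - y k).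
  have e1 : \sum_k (w k - v k) * (v k - y k + t) =
      \sum_k (w k - v k) * (v k - y k) + (\sum_k (w k - v k)) * t.
    by rewrite mulr_suml -big_split /=; apply: eq_bigr => k _; rewrite mulrDr.
  have e2 : \sum_k (w k - v k) = 0.
    by rewrite sumrB sw; have [-> _] := PJ_simplex y; rewrite subrr.
  rewrite e2 mul0r addr0 in e1; rewrite -e1.
  apply: sumr_ge0 => k _; rewrite /v /PJ -/t.
  have [h|h] := leP (y k - t) 0.
    rewrite subr0; apply: mulr_ge0 => //; lra.
  by rewrite (_ : y k - t - y k + t = 0) ?mulr0 //; ring.
have e : \sum_k (w k - y k) ^+ 2 = \sum_k (v k - y k) ^+ 2 + \sum_k (w k - v k) ^+ 2
      + 2 * \sum_k (w k - v k) * (v k - y k).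
  rewrite mulr_sumr -!big_split /=; apply: eq_bigr => k _; ring.
rewrite e lerDl; apply: mulr_ge0 => //.
Qed.

Lemma PJ_is_proj y : is_proj C y (PJ y).
Proof.
split; first exact: PJ_simplex.
move=> w hw; rewrite /dist2; apply: ler_wsqrtr.
have h := PJ_ineq y w hw.
have h0 : 0 <= \sum_k (w k - PJ y k) ^+ 2 by apply: sumr_ge0 => k _; exact: sqr_ge0.
lra.
Qed.

Lemma proj_PJ y : proj_simplex C y = PJ y.
Proof.
have [hu hmin] := xgetPex (fun _ => 0) (ex_intro _ _ (PJ_is_proj y)).
set u := xget _ _ in hu hmin *.
rewrite /proj_simplex -/u.
have := hmin _ (PJ_simplex y); rewrite /dist2 ler_sqrt; last first.
  by apply: sumr_ge0 => k _; exact: sqr_ge0.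
move=> h1; have := PJ_ineq y _ hu => h2.
have h3 : \sum_k (u k - PJ y k) ^+ 2 <= 0.
  by move: (le_trans h2 h1); rewrite -{2}(addr0 (\sum_k (PJ y k - y k) ^+ 2)) lerD2l.
apply/funext => k; apply/eqP; rewrite -subr_eq0 -sqrf_eq0; apply/eqP.
apply: (@psumr_eq0P _ _ xpredT (fun k => (u k - PJ y k) ^+ 2)) => //.
  by move=> m _; exact: sqr_ge0.
by apply/eqP; rewrite eq_le h3; apply: sumr_ge0 => m _; exact: sqr_ge0.
Qed.

Lemma fS_perm (s : {perm 'I_n}) y t : fS (y \o s) t = fS y t.
Proof. by rewrite /fS [RHS](reindex_inj (@perm_inj _ s)). Qed.

Lemma PJ_perm (s : {perm 'I_n}) y k : PJ (y \o s) k = PJ y (s k).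
Proof.
rewrite /PJ; congr (Num.max (_ - _) 0).
by apply: (@fS_uniq y); rewrite ?tauP // -(fS_perm s) tauP.
Qed.

Lemma PJ_mono y y' dl i : (forall k, y' k - dl <= y k) -> y' i = y i + dl ->
  PJ y i <= PJ y' i.
Proof.
move=> hk hi.
have f1 : fS y' (tau y + dl) <= C.
  rewrite -(tauP y); apply: ler_sum => k _; apply: max0_le.
  by have := hk k; lra.
have t1 : tau y' <= tau y + dl.
  rewrite leNgt; apply/negP => lt.
  have := fS_strict y' _ _ lt; rewrite tauP => /(_ hC); rewrite ltNge f1 //.
rewrite /PJ hi; apply: max0_le; lra.
Qed.

End det.

From mathcomp Require Import measurable_realfun.

Arguments fS {R n}.
Arguments tau {R n}.
Arguments PJ {R n}.
Arguments tau_lt {R n C}.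
Arguments tauP {R n C}.
Arguments PJ_mono {R n C}.
Arguments PJ_perm {R n C}.
Arguments proj_PJ {R n C}.
Arguments PJ_ge0 {R n C}.

Definition vecR (R : realType) (n : nat) := 'I_n -> R.
HB.instance Definition _ (R : realType) n := Choice.on (vecR R n).
HB.instance Definition _ (R : realType) n := isPointed.Build (vecR R n) (fun _ => 0).

Section meas.
Variables (R : realType) (n : nat).

Definition Rect : set (set (vecR R n)) :=
  [set B | exists A : 'I_n -> set R, (forall k, measurable (A k)) /\
     B = [set y | forall k, A k (y k)]].
Definition Y := g_sigma_algebraType Rect.

Lemma measurable_sum_fun d (X : measurableType d) (r : seq 'I_n) (g : 'I_n -> X -> R) :
  (forall k, measurable_fun setT (g k)) ->
  measurable_fun setT (fun w => \sum_(k <- r) g k w).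
Proof.
move=> mg; elim: r => [|a r IH].
  under eq_fun do rewrite big_nil; exact: measurable_cst.
under eq_fun do rewrite big_cons; exact: measurable_funD.
Qed.

Lemma meas_ray d (X : measurableType d) (g : X -> R) :
  (forall t, measurable [set w | g w < t]) -> measurable_fun setT g.
Proof.
move=> h; apply: (measurability _ (RGenInftyO.measurableE R)) => //.
move=> _ [_ [t ->] <-]; rewrite setTI.
rewrite (_ : _ @^-1` _ = [set w | g w < t]); first exact: h.
by apply/seteqP; split => w /=; rewrite in_itv.
Qed.

Lemma measurable_PJ C (hC : 0 < C) (hn : (0 < n)%N) d (X : measurableType d)
  (u : 'I_n -> X -> R) i :
  (forall k, measurable_fun setT (u k)) ->
  measurable_fun setT (fun w => PJ C (fun k => u k w) i).
Proof.
move=> mu.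
have mtau : measurable_fun setT (fun w => tau C (fun k => u k w)).
  apply: meas_ray => t.
  rewrite (_ : [set w | _ < t] = setT `&` (fun w => fS (fun k => u k w) t) @^-1` `]-oo, C[).
    have mS : measurable_fun setT (fun w => fS (fun k => u k w) t).
      apply: (@measurable_sum_fun _ _ (index_enum 'I_n) (fun k w => Num.max (u k w - t) 0)) => k.
      by apply: measurable_maxr => //; apply: measurable_funB.
    exact: mS.
  apply/seteqP; split => w /=; rewrite in_itv /= => h.
    by split => //; apply/(tau_lt hC hn).
  by apply/(tau_lt hC hn); case: h.
rewrite /PJ; apply: measurable_maxr => //; exact: measurable_funB.
Qed.

Lemma mcoord k : measurable_fun setT (fun z : Y => z k).
Proof.
move=> _ B mB; apply: sub_sigma_algebra.
exists (fun m => if m == k then B else setT); split.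
  by move=> m; case: ifP.
apply/seteqP; split => z /=.
  by move=> [_ hz] m; case: eqP => [->|].
by move=> h; split => //; have := h k; rewrite eqxx.
Qed.

End meas.

Section exch.
Local Open Scope ereal_scope.
Variables (R : realType) (n : nat) (d : measure_display) (T : measurableType d)
  (P : probability T R) (eta : 'I_n -> T -> R).
Hypothesis eta_meas : forall i, measurable_fun [set: T] (eta i).
Hypothesis eta_indep : mutually_independent P eta.

Lemma mphi_gen (e : 'I_n -> T -> R) : (forall i, measurable_fun setT (e i)) ->
  measurable_fun setT ((fun w => (fun k => e k w)) : T -> Y R n).
Proof.
move=> me.
have mY : @measurable _ (Y R n) = <<s Rect R n >> by [].
apply: (measurability _ mY) => //.
move=> _ [_ [A [mA ->]] <-]; rewrite setTI.
rewrite (_ : _ @^-1` _ = \bigcap_(k in [set: 'I_n]) (e k @^-1` A k)).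
  apply: fin_bigcap_measurable; first exact: finite_finset.
  by move=> k _; rewrite -[X in measurable X]setTI; apply: me.
apply/seteqP; split => w /= h k.
  by move=> _; apply: h.
by apply: h.
Qed.

Lemma exch (s : {perm 'I_n})
  (law : forall k A, measurable A -> P (eta (s k) @^-1` A) = P (eta k @^-1` A))
  (F : Y R n -> \bar R) : measurable_fun setT F -> (forall z, 0 <= F z) ->
  \int[P]_w F (fun k => eta (s k) w) = \int[P]_w F (fun k => eta k w).
Proof.
move=> mF F0.
have m1 := @mphi_gen eta eta_meas.
have m2 := @mphi_gen (fun k => eta (s k)) (fun k => eta_meas (s k)).
pose M1 := @measure_function_pushforward__canonical__measure_function_Measure _ _ _ _ _ P _ m1.
pose M2 := @measure_function_pushforward__canonical__measure_function_Measure _ _ _ _ _ P _ m2.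
have eqM : forall A, measurable A -> M2 A = M1 A.
  have mY : @measurable _ (Y R n) = <<s Rect R n >> by [].
  apply: (@measure_unique _ R (Y R n) (Rect R n) (fun=> setT) mY _ _ _ M2 M1).
  - move=> _ _ [A [mA ->]] [B [mB ->]]; exists (fun k => A k `&` B k); split.
      by move=> k; exact: measurableI.
    apply/seteqP; split => z /=.
      by move=> [h1 h2] k; split; [apply: h1|apply: h2].
    by move=> h; split => k; have [] := h k.
  - move=> _; exists (fun=> setT); split => //.
    by apply/seteqP; split.
  - by apply/seteqP; split => // z _; exists 0%N.
  - move=> _ [A [mA ->]].
    change (P ((fun w => (fun k => eta (s k) w) : Y R n) @^-1` [set y | forall k, A k (y k)]) =
            P ((fun w => (fun k => eta k w) : Y R n) @^-1` [set y | forall k, A k (y k)])).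
    rewrite (_ : _ @^-1` _ = \bigcap_(k in [set: 'I_n]) (eta k @^-1` A ((s^-1)%g k))); last first.
      apply/seteqP; split => w /= h k.
        by move=> _; have := h ((s^-1)%g k); rewrite permKV.
      by have := h (s k) I; rewrite permK.
    rewrite (_ : _ @^-1` _ = \bigcap_(k in [set: 'I_n]) (eta k @^-1` A k)); last first.
      apply/seteqP; split => w /= h k.
        by move=> _; apply: h.
      by apply: h.
    rewrite eta_indep; last by move=> k; exact: mA.
    rewrite eta_indep; last exact: mA.
    rewrite (reindex_inj (@perm_inj _ s)) /=; apply: eq_bigr => k _.
    by rewrite permK law.
  - move=> _; have -> : M2 setT = P setT by [].
    by rewrite probability_setT ltry.
have h1 := ge0_integral_pushforward m1 P measurableT mF (fun z _ => F0 z).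
have h2 := ge0_integral_pushforward m2 P measurableT mF (fun z _ => F0 z).
rewrite preimage_setT in h1 h2.
transitivity (\int[M2]_z F z); first by rewrite h2.
transitivity (\int[M1]_z F z); last by rewrite h1.
by apply: eq_measure_integral => A mA _; rewrite eqM.
Qed.

End exch.

Arguments fS {R n}.
Arguments tau {R n}.
Arguments PJ {R n}.
Arguments tau_lt {R n C}.
Arguments tauP {R n C}.
Arguments PJ_mono {R n C}.
Arguments PJ_perm {R n C}.
Arguments proj_PJ {R n C}.
Arguments PJ_ge0 {R n C}.
Arguments PJ_simplex {R n C}.
Arguments measurable_PJ {R n C} hC hn {d X} u i.
Arguments mcoord {R n}.
Arguments exch {R n d T P eta} eta_meas eta_indep {s} law {F}.

Lemma PJ_leC (R : realType) n (C : R) (hC : 0 < C) (hn : (0 < n)%N) (y : 'I_n -> R) (k : 'I_n) :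
  PJ C y k <= C.
Proof.
have [hs _] := PJ_simplex hC hn y.
rewrite -[X in _ <= X]hs (bigD1 k) //= lerDl; apply: sumr_ge0 => m _; exact: PJ_ge0.
Qed.

Theorem lemma4 (R : realType) (n : nat) (hn : (2 <= n)%N) (C : R) (hC : 0 < C)
  (x : 'I_n -> R) (hx : simplex_pos C x)
  (d : measure_display) (T : measurableType d) (P : probability T R)
  (eta : 'I_n -> T -> R)
  (eta_meas : forall i, measurable_fun [set: T] (eta i))
  (eta_indep : mutually_independent P eta)
  (eta_law : (exists2 b : R, 0 < b &
                 forall i (A : set R), measurable A -> P (eta i @^-1` A) = laplace_prob b A)
          \/ (exists2 sigma : R, 0 < sigma &
                 forall i (A : set R), measurable A -> P (eta i @^-1` A) = normal_prob 0 sigma A)) :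
  forall i j : 'I_n, x i <= x j ->
    (bias_proj P C x eta i - bias_proj P C x eta j <= (x j - x i)%:E)%E.
Proof.
move=> i j hij.
have hn1 : (0 < n)%N by apply: leq_trans hn.
have hid : forall k m (A : set R), measurable A -> P (eta k @^-1` A) = P (eta m @^-1` A).
  by case: eta_law => [[b _ hb]|[sg _ hs]] k m A mA; [rewrite !hb|rewrite !hs].
pose s := tperm i j.
have law : forall k (A : set R), measurable A -> P (eta (s k) @^-1` A) = P (eta k @^-1` A).
  by move=> k A mA; exact: hid.
have mPJ : forall (a : 'I_n -> R) k,
    measurable_fun setT (fun w => (PJ C (fun m => a m + eta m w) k)%:E).
  move=> a k; apply/measurable_EFinP.
  apply: (measurable_PJ hC hn1 (fun m w => a m + eta m w)) => m.
  exact: measurable_funD.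
pose F := fun z : Y R n => (PJ C (fun k => x (s k) + z k) i)%:E.
have mF : measurable_fun setT F.
  apply/measurable_EFinP.
  apply: (measurable_PJ hC hn1 (fun m (z : Y R n) => x (s m) + z m)) => m.
  by apply: measurable_funD => //; exact: mcoord.
have F0 : forall z, (0 <= F z)%E by move=> z; rewrite lee_fin; exact: PJ_ge0.
have hex := exch eta_meas eta_indep law mF F0.
set a := (\int[P]_w (PJ C (fun k => x k + eta k w) i)%:E)%E.
set b := (\int[P]_w (PJ C (fun k => x k + eta k w) j)%:E)%E.
have ha : (\int[P]_w (proj_simplex C (fun k => x k + eta k w) i)%:E)%E = a.
  by apply: eq_integral => w _; rewrite (proj_PJ hC hn1).
have hb : (\int[P]_w (proj_simplex C (fun k => x k + eta k w) j)%:E)%E = b.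
  by apply: eq_integral => w _; rewrite (proj_PJ hC hn1).
have hb2 : b = (\int[P]_w F (fun k => eta (s k) w))%E.
  apply: eq_integral => w _; rewrite /F.
  have -> : (fun k => x (s k) + eta (s k) w) = (fun k => x k + eta k w) \o s by [].
  by rewrite (PJ_perm hC hn1) /s tpermL.
have hab : (a <= b)%E.
  rewrite hb2 hex /F; apply: ge0_le_integral => //.
    by move=> w _; rewrite lee_fin; exact: PJ_ge0.
  move=> w _; rewrite lee_fin.
  apply: (PJ_mono hC hn1 (fun k => x k + eta k w) (fun k => x (s k) + eta k w) (x j - x i) i).
    move=> k; rewrite /s; case: tpermP => [->|->|_ _]; lra.
  by rewrite /s tpermL; lra.
have hbC : (b <= C%:E)%E.
  apply: (@le_trans _ _ (\int[P]_(w in setT) (cst C%:E) w)%E).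
    apply: ge0_le_integral => //.
    - by move=> w _; rewrite lee_fin; exact: PJ_ge0.
    - by move=> w _; rewrite lee_fin; exact: PJ_leC.
  rewrite integral_cst //; set Pt := (X in (C%:E * X)%E); have -> : Pt = 1%E by rewrite /Pt; exact: probability_setT.
  by rewrite mule1.
have a0 : (0 <= a)%E by apply: integral_ge0 => w _; rewrite lee_fin; exact: PJ_ge0.
have afin : a \is a fin_num by rewrite ge0_fin_numE // (le_lt_trans (le_trans hab hbC)) ?ltry.
have bfin : b \is a fin_num by rewrite ge0_fin_numE ?(le_trans a0 hab) // (le_lt_trans hbC) ?ltry.
rewrite /bias_proj ha hb -(fineK afin) -(fineK bfin) -!EFinB lee_fin.
have : fine a <= fine b by rewrite -lee_fin !fineK.
lra.
Qed.
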